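(* For every positive integer $m$, $$\sum_{k\ge 0}(-1)^k\binom{2m}{m+3k}=3^{m-1}+\frac12\binom{2m}{m},$$ where binomial coefficients $\binom{2m}{j}$ with $j>2m$ are zero. *)

(* Defs.v *)
From mathcomp Require Import all_boot all_order all_algebra.

(* Main.v *)
Require Import Defs.
From mathcomp Require Import all_boot all_order all_algebra all_field.
From mathcomp Require Import ring lra zify.
Import GRing.Theory Num.Theory.
Local Open Scope ring_scope.

Lemma from_phi {z X Y : algC} (Q : algC) : z ^+ 2 - z + 1 = 0 ->
  X - Y = (z ^+ 2 - z + 1) * Q -> X = Y.
Proof. by move=> hz H; apply/eqP; rewrite -subr_eq0 H hz mul0r. Qed.

Lemma pow6 {u : algC} n r : u ^+ 6 = 1 -> u ^+ (6 * n + r) = u ^+ r.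
Proof. by move=> hu; rewrite exprD exprM hu expr1n mul1r. Qed.

Definition hh (z : algC) (t : nat) := z ^+ t + (-1) ^+ t + z ^+ (5 * t)%N.

Lemma binsum (x : algC) (n a : nat) :
  \sum_(0 <= i < n.+1) ('C(n, i))%:R * x ^+ (i + a) = x ^+ a * (1 + x) ^+ n.
Proof.
rewrite addrC exprD1n mulr_sumr big_mkord; apply: eq_bigr => i _.
by rewrite -mulr_natl exprD; ring.
Qed.

Lemma tri (F : nat -> algC) n :
  \sum_(0 <= i < (3 * n)%N) F i = \sum_(0 <= k < n) (F (3 * k)%N + F (3 * k + 1)%N + F (3 * k + 2)%N).
Proof.
elim: n => [|n IH]; first by rewrite !big_geq.
have -> : (3 * n.+1 = (3 * n).+2.+1)%N by lia.
rewrite big_nat_recr // big_nat_recr // big_nat_recr // IH big_nat_recr //=.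
by rewrite !addrA addn1 addn2.
Qed.

Section Z.
Variable z : algC.
Hypothesis hz : z ^+ 2 - z + 1 = 0.

Lemma z3 : z ^+ 3 = -1.
Proof. by apply: (from_phi (z + 1) hz); ring. Qed.

Lemma z6 : z ^+ 6 = 1.
Proof. by apply: (from_phi (z^+4 + z^+3 - z - 1) hz); ring. Qed.

Lemma n6 : (-1 : algC) ^+ 6 = 1.
Proof. by ring. Qed.

Lemma powsym {u : algC} {a b N : nat} : u ^+ 6 = 1 -> (a + b = 6 * N)%N -> u ^+ a = u ^+ (5 * b)%N.
Proof.
move=> hu hab.
rewrite -(pow6 b a hu).
have -> : (6 * b + a = 6 * N + 5 * b)%N by lia.
by rewrite pow6.
Qed.

Lemma hh_sym a b N : (a + b = 6 * N)%N -> hh z a = hh z b.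
Proof.
move=> hab; rewrite /hh.
rewrite (powsym (u := z) z6 hab) (powsym (u := -1) n6 hab).
have hba : (b + a = 6 * N)%N by lia.
rewrite (powsym (u := z) z6 hba).
have -> : (-1 : algC) ^+ (5 * b)%N = (-1) ^+ b.
  by rewrite exprM (_ : (-1 : algC) ^+ 5 = -1) //; ring.
by rewrite addrC [z ^+ (5 * b) + _]addrC addrA.
Qed.

Lemma hh_shift m i : hh z (m + i + 5 * m)%N = hh z i.
Proof.
rewrite /hh.
have -> : (m + i + 5 * m = 6 * m + i)%N by lia.
rewrite !pow6 ?z6 ?n6 //.
have -> : (5 * (6 * m + i) = 6 * (5 * m) + 5 * i)%N by lia.
by rewrite pow6 ?z6.
Qed.

Lemma hh3 k r : hh z (3 * k + r)%N = (-1) ^+ k * hh z r.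
Proof.
rewrite /hh.
have -> : (5 * (3 * k + r) = 3 * (5 * k) + 5 * r)%N by lia.
rewrite (exprD z (3 * k)) (exprD (-1) (3 * k)) (exprD z (3 * (5 * k))).
rewrite (exprM z 3 k) (exprM (-1) 3 k) (exprM z 3 (5 * k)) z3.
rewrite (_ : (-1 : algC) ^+ 3 = -1); last by ring.
rewrite (exprM (-1) 5 k) (_ : (-1 : algC) ^+ 5 = -1); last by ring.
by ring.
Qed.

Lemma hh0 : hh z 0 = 3.
Proof. rewrite /hh muln0 !expr0; ring. Qed.

Lemma hh1 : hh z 1 = 0.
Proof.
rewrite /hh muln1 expr1.
by apply: (from_phi (z^+3 + z^+2 - 1) hz); ring.
Qed.

Lemma hh2 : hh z 2 = 0.
Proof.
rewrite /hh.
by apply: (from_phi (z^+8 + z^+7 - z^+5 - z^+4 + z^+2 + z + 1) hz); ring.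
Qed.

Lemma sq1 : (1 + z) ^+ 2 = 3 * z.
Proof. by apply: (from_phi (1) hz); ring. Qed.

Lemma sq5 : (1 + z ^+ 5) ^+ 2 = 3 * z ^+ 5.
Proof. by apply: (from_phi (z^+8 + z^+7 - z^+5 - z^+4 - z^+3 + z + 1) hz); ring. Qed.

End Z.

Lemma wlem (w : algC) (m : nat) : (1 + w) ^+ 2 = 3 * w -> w ^+ 6 = 1 ->
  w ^+ (5 * m) * (1 + w) ^+ (2 * m) = 3 ^+ m.
Proof.
move=> h1 h6; rewrite (exprM (1 + w) 2 m) h1 exprMn mulrCA -exprD.
by rewrite (_ : (5 * m + m = 6 * m)%N) ?exprM ?h6 ?expr1n ?mulr1 //; lia.
Qed.

Lemma mainC (z : algC) (hz : z ^+ 2 - z + 1 = 0) (m : nat) (hm : (0 < m)%N) :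
  6 * \sum_(0 <= k < m.+1) (-1 : algC) ^+ k * ('C(2 * m, m + 3 * k))%:R
  = 2 * 3 ^+ m + 3 * ('C(2 * m, m))%:R.
Proof.
pose f i := ('C(2 * m, i))%:R * hh z (i + 5 * m)%N.
pose T := \sum_(0 <= i < (2 * m).+1) f i.
have z6' := z6 z hz.
have T1 : T = 2 * 3 ^+ m.
  rewrite /T /f /hh.
  under eq_bigr => i _ do rewrite !mulrDr (exprM z 5).
  rewrite !big_split /= !binsum.
  rewrite subrr expr0n (_ : (2 * m == 0)%N = false) /=; last by lia.
  rewrite mulr0 addr0.
  have y6 : (z ^+ 5) ^+ 6 = 1 by rewrite -exprM mulnC exprM z6' expr1n.
  by rewrite (wlem _ m (sq1 z hz) z6') (wlem _ m (sq5 z hz) y6) -mulr2n mulr_natl.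
pose Sp := \sum_(0 <= i < m.+1) f (i + m)%N.
have T2 : T = 2 * Sp - f m.
  rewrite /T (big_cat_nat _ (n := m)) //=; last by lia.
  rewrite (big_addn 0 (2 * m).+1 m) (_ : ((2 * m).+1 - m = m.+1)%N); last by lia.
  rewrite big_nat_rev /= /Sp big_nat_recl //=.
  rewrite (@eq_big_nat _ _ _ 0 m _ (fun i => f (i.+1 + m)%N)); last first.
    move=> i /andP [_ hi]; rewrite /f add0n.
    rewrite (_ : (m - i.+1 = 2 * m - (i.+1 + m))%N); last by lia.
    rewrite bin_sub; last by lia.
    congr (_ * _); apply: (hh_sym z hz _ _ (2 * m)%N); lia.
  rewrite !add0n; ring.
have hk0 k : hh z (3 * k)%N = (-1) ^+ k * 3.
  by rewrite -[(3 * k)%N]addn0 (hh3 z hz) (hh0 z).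
pose g i := ('C(2 * m, i + m))%:R * hh z i.
have T3 : Sp = \sum_(0 <= i < (3 * m.+1)%N) g i.
  rewrite /Sp [RHS](big_cat_nat _ (n := m.+1)) //=; last by lia.
  have -> : \sum_(m.+1 <= i < (3 * m.+1)%N) g i = 0.
    rewrite big_nat_cond big1 // => i /andP [/andP [hi _] _].
    rewrite /g bin_small ?mul0r //; lia.
  rewrite addr0.
  apply: eq_bigr => i _; rewrite /f /g.
  by rewrite (addnC i m) (hh_shift z hz).
have T4 : Sp = 3 * \sum_(0 <= k < m.+1) (-1 : algC) ^+ k * ('C(2 * m, m + 3 * k))%:R.
  rewrite T3 tri mulr_sumr; apply: eq_bigr => k _.
  rewrite /g hk0 !(hh3 z hz) (hh1 z hz) (hh2 z hz) (addnC (3 * k)).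
  ring.
have fm : f m = ('C(2 * m, m))%:R * 3.
  have := hh_shift z hz m 0; rewrite addn0 (hh0 z) => e.
  by rewrite /f e.
rewrite T1 T4 fm in T2.
rewrite T2; ring.
Qed.

Theorem lemma5 (m : nat) (hm : (0 < m)%N) :
  \sum_(0 <= k < m.+1) (-1 : rat) ^+ k * ('C(2 * m, m + 3 * k))%:R
  = (3 : rat) ^+ (m - 1) + (1 / 2) * ('C(2 * m, m))%:R.
Proof.
pose s := sqrtC (-3 : algC).
have hs : s ^+ 2 = -3 by rewrite /s sqrtCK.
pose z := (1 + s) / 2.
have hz : z ^+ 2 - z + 1 = 0.
  have -> : z ^+ 2 - z + 1 = (s ^+ 2 + 3) / 4.
    by rewrite /z; field.
  by apply/eqP; rewrite mulf_eq0 -[s ^+ 2 + 3]/(s ^+ 2 + 3 : algC) hs addNr eqxx.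
have H : 6 * \sum_(0 <= k < m.+1) (-1 : rat) ^+ k * ('C(2 * m, m + 3 * k))%:R
  = 2 * 3 ^+ m + 3 * ('C(2 * m, m))%:R.
  apply: (fmorph_inj (@ratr algC)).
  rewrite !rmorphD !rmorphM rmorph_sum !rmorphXn !rmorph_nat.
  rewrite -(mainC _ hz _ hm); congr (_ * _); apply: eq_bigr => k _.
  by rewrite rmorphM rmorphXn rmorphN1 rmorph_nat.
case: m hm H => [//|m] _ H.
rewrite subSS subn0 exprS in H *.
lra.
Qed.
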